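(* Let $A$ be a simply laced hyperbolic generalized Cartan matrix with node set $I$, $n=|I|-1$. Let $\phi$ be any facet of the projectivized Weyl chamber $PC$ and $p$ any point of $\phi$. Then there is a facet $\phi'$ of $PC$ making dihedral angle $\pi/3$ with $\phi$ such that the hyperbolic distance $d(p,\phi\cap\phi')\leq\cosh^{-1}\sqrt{4/3}$.
   Context: $A=(a_{ij})_{i,j\in I}$ is simply laced ($a_{ii}=2$, $a_{ij}\in\{0,-1\}$ for $i\ne j$) and hyperbolic (connected Dynkin diagram, not of finite or affine type, every proper connected subdiagram of finite or affine type). Let $\Lambda=\bigoplus_i\mathbb{Z}\alpha_i$ with symmetric form $\alpha_i\cdot\alpha_j=a_{ij}$; then $\Lambda\otimes\mathbb{R}$ has signature $(n,1)$. The fundamental chamber is $C=\{x\in\Lambda\otimes\mathbb{R}: x\cdot\alpha_i\le0\text{ for all }i\}$; the vectors of negative norm form two components, and the future cone $F$ is the one that $C$ meets. Its projectivization $PF$ is hyperbolic $n$-space $H^n$, with distance between points represented by $x,y\in F$ given by $\cosh^{-1}\sqrt{(x\cdot y)^2/(x^2y^2)}$. $C$ lies in the closure $\overline F$, and its projectivization $PC$ is a hyperbolic simplex (together with its ideal vertices) in $\overline{H^n}$, whose facets are $\phi_i=PC\cap P(\alpha_i^\perp)$, $i\in I$; facets $\phi_i,\phi_j$ ($i\ne j$) meet at angle $\pi/3$ exactly when $a_{ij}=-1$ and at angle $\pi/2$ when $a_{ij}=0$. *)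

(* Defs.v *)
From HB Require Import structures.
From mathcomp Require Import all_boot all_order all_algebra.
From mathcomp Require Import all_classical all_reals all_analysis.
Set Implicit Arguments. Unset Strict Implicit. Unset Printing Implicit Defensive.
Import Order.TTheory GRing.Theory Num.Theory.
Local Open Scope ring_scope.

Definition simply_laced (m : nat) (A : 'M[int]_m) : Prop :=
  (forall i, A i i = 2) /\
  (forall i j, i != j -> A i j = 0 \/ A i j = -1) /\
  (forall i j, A i j = 0 <-> A j i = 0).

Definition dynkin_rel (m : nat) (A : 'M[int]_m) (J : {set 'I_m}) : rel 'I_m :=
  fun i j => [&& i \in J, j \in J, i != j & A i j != 0].

Definition connected_sub (m : nat) (A : 'M[int]_m) (J : {set 'I_m}) : Prop :=
  J != finset.set0 /\ forall i j, i \in J -> j \in J -> connect (dynkin_rel A J) i j.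

Definition subform (R : realType) (m : nat) (A : 'M[int]_m) (J : {set 'I_m})
  (v : 'I_m -> R) : R :=
  \sum_(i in J) \sum_(j in J) v i * (A i j)%:~R * v j.

(* finite type (for a connected simply laced diagram): positive definite *)
Definition finite_type_sub (R : realType) (m : nat) (A : 'M[int]_m)
  (J : {set 'I_m}) : Prop :=
  forall v : 'I_m -> R, (exists2 i, i \in J & v i != 0) -> 0 < subform A J v.

(* affine type (for a connected simply laced diagram):
   positive semidefinite but not positive definite *)
Definition affine_type_sub (R : realType) (m : nat) (A : 'M[int]_m)
  (J : {set 'I_m}) : Prop :=
  (forall v : 'I_m -> R, 0 <= subform A J v) /\ ~ finite_type_sub R A J.

Definition hyperbolic (R : realType) (m : nat) (A : 'M[int]_m) : Prop :=
  connected_sub A [set: 'I_m] /\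
  ~ finite_type_sub R A [set: 'I_m] /\ ~ affine_type_sub R A [set: 'I_m] /\
  forall J : {set 'I_m}, J \proper [set: 'I_m] -> connected_sub A J ->
    finite_type_sub R A J \/ affine_type_sub R A J.

(* Lambda (x) R = R^I in the basis (alpha_i); x . y = sum x_i a_ij y_j *)
Definition gram_form (R : realType) (m : nat) (A : 'M[int]_m) (x y : 'I_m -> R) : R :=
  \sum_i \sum_j x i * (A i j)%:~R * y j.

Definition sroot (R : realType) (m : nat) (i : 'I_m) : 'I_m -> R :=
  fun j => (j == i)%:R.

Definition in_chamber (R : realType) (m : nat) (A : 'M[int]_m) (x : 'I_m -> R) : Prop :=
  forall i, gram_form A x (sroot R i) <= 0.

Definition acosh (R : realType) (t : R) : R := ln (t + Num.sqrt (t ^+ 2 - 1)).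

(* hyperbolic distance between the points of H^n represented by x, y *)
Definition hdist (R : realType) (m : nat) (A : 'M[int]_m) (x y : 'I_m -> R) : R :=
  acosh (Num.sqrt ((gram_form A x y) ^+ 2 / (gram_form A x x * gram_form A y y))).

(* dihedral angle between facets phi_i and phi_j (normals alpha_i, alpha_j) *)
Definition dihedral_angle (R : realType) (m : nat) (A : 'M[int]_m) (i j : 'I_m) : R :=
  acos (- gram_form A (sroot R i) (sroot R j) /
        Num.sqrt (gram_form A (sroot R i) (sroot R i) * gram_form A (sroot R j) (sroot R j))).

(* Main.v *)
Require Import Defs.
From HB Require Import structures.
From mathcomp Require Import all_boot all_order all_algebra.
From mathcomp Require Import all_classical all_reals all_analysis.
From mathcomp Require Import ring lra.
From mathcomp Require Import zify.
Import Order.TTheory GRing.Theory Num.Theory.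
Local Open Scope ring_scope.
Set Implicit Arguments. Unset Strict Implicit.

Definition bf (R : realType) (m : nat) (P : 'M[R]_m) (a b : 'rV[R]_m) : R :=
  (a *m P *m b^T) 0 0.

Lemma bfDl (R : realType) m (P : 'M[R]_m) a b c : bf P (a + b) c = bf P a c + bf P b c.
Proof. by rewrite /bf !mulmxDl mxE. Qed.
Lemma bfZl (R : realType) m (P : 'M[R]_m) s a c : bf P (s *: a) c = s * bf P a c.
Proof. by rewrite /bf -!scalemxAl mxE. Qed.
Lemma bfDr (R : realType) m (P : 'M[R]_m) a b c : bf P c (a + b) = bf P c a + bf P c b.
Proof. by rewrite /bf linearD /= mulmxDr mxE. Qed.
Lemma bfZr (R : realType) m (P : 'M[R]_m) s a c : bf P c (s *: a) = s * bf P c a.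
Proof. by rewrite /bf linearZ /= -scalemxAr mxE. Qed.
Lemma bfC (R : realType) m (P : 'M[R]_m) a b : P^T = P -> bf P a b = bf P b a.
Proof.
move=> hP; rewrite /bf -[in LHS](trmxK (a *m P *m b^T)).
by rewrite [in LHS]mxE !trmx_mul trmxK hP mulmxA.
Qed.
Lemma bf_exp2 (R : realType) m (P : 'M[R]_m) a b c d p q : 
  bf P (a + p *: b) (c + q *: d) =
  bf P a c + q * bf P a d + p * bf P b c + p * q * bf P b d.
Proof. rewrite !bfDl !bfDr !bfZl !bfZr. ring. Qed.
Lemma bf_exp (R : realType) m (P : 'M[R]_m) a b s : P^T = P ->
  bf P (a + s *: b) (a + s *: b) = bf P a a + 2 * s * bf P a b + s ^+ 2 * bf P b b.
Proof. move=> hP; rewrite bf_exp2 (bfC b a hP). ring. Qed.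

Definition ev (m : nat) (R : realType) (k : 'I_m) : 'rV[R]_m := delta_mx 0 k.

Lemma bf_er (R : realType) m (P : 'M[R]_m) a k : bf P a (ev R k) = (a *m P) 0 k.
Proof. by rewrite /bf /ev trmx_delta -colE mxE. Qed.

Lemma ev_mul (R : realType) m (k : 'I_m) (b : 'rV[R]_m) : (ev R k *m b^T) 0 0 = b 0 k.
Proof. by rewrite /ev -rowE !mxE. Qed.

Lemma ev_row (R : realType) m (k : 'I_m) (M : 'M[R]_m) l : (ev R k *m M) 0 l = M k l.
Proof. by rewrite /ev -rowE !mxE. Qed.

Lemma bf_sum (R : realType) m (P : 'M[R]_m) a b :
  bf P a b = \sum_k \sum_l a 0 k * P k l * b 0 l.
Proof.
rewrite /bf mxE. rewrite exchange_big /=. apply: eq_bigr => l _.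
rewrite mxE big_distrl /=. apply: eq_bigr => k _. by rewrite !mxE.
Qed.
Lemma unitP (R : realType) m (P : 'M[R]_m) (X : 'rV[R]_m) :
  P^T = P -> (forall k (y : 'rV_m), y 0 k = 0 -> 0 <= bf P y y) ->
  bf P X X < 0 -> P \in unitmx.
Proof.
move=> hP hpsd hX. rewrite unitmxE unitfE. apply/negP => /det0P [v vn0 vP0].
have [k hk] : exists k, v 0 k != 0.
  apply: contrapT => hall. move/eqP: vn0; apply. apply/rowP => k. rewrite mxE.
  case: (eqVneq (v 0 k) 0) => // hk; exfalso; apply: hall; by exists k.
have hv : forall b, bf P v b = 0 by move=> b; rewrite /bf vP0 mul0mx mxE.
set t := X 0 k / v 0 k.
have := hpsd k (X + (- t) *: v).
rewrite bf_exp // (bfC X v hP) !hv.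
have -> : (X + - t *: v) 0 k = 0.
  rewrite !mxE /t. by rewrite mulNr divfK // subrr.
move=> /(_ erefl). lra.
Qed.

Lemma Wprops (R : realType) m (P : 'M[R]_m) : P^T = P -> P \in unitmx ->
  [/\ P *m invmx P = 1, invmx P *m P = 1 & (invmx P)^T = invmx P].
Proof. move=> hP hu. by rewrite mulmxV // mulVmx // trmx_inv hP. Qed.

Lemma bf_om (R : realType) m (P : 'M[R]_m) k b : P^T = P -> P \in unitmx ->
  bf P (ev R k *m invmx P) b = b 0 k.
Proof.
move=> hP hu; have [h1 h2 h3] := Wprops hP hu.
by rewrite /bf -(mulmxA (ev R k)) h2 mulmx1 ev_mul.
Qed.

Lemma W_diag (R : realType) m (P : 'M[R]_m) (X : 'rV[R]_m) k :
  P^T = P -> (forall k (y : 'rV_m), y 0 k = 0 -> 0 <= bf P y y) ->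
  bf P X X < 0 -> invmx P k k <= 0.
Proof.
move=> hP hpsd hX. have hu := unitP hP hpsd hX.
have [h1 h2 h3] := Wprops hP hu.
rewrite leNgt; apply/negP => hW.
set om := ev R k *m invmx P.
have homk : om 0 k = invmx P k k by rewrite /om ev_row.
set t := X 0 k / invmx P k k.
set y := X - t *: om.
have hy : y 0 k = 0.
  have -> : y 0 k = X 0 k - t * om 0 k by rewrite /y !mxE.
  rewrite homk /t divfK ?subrr //. by rewrite gt_eqF.
have := hpsd k y hy.
have eX : X = y + t *: om by rewrite /y subrK.
have hyom : bf P y om = 0 by rewrite (bfC y om hP) bf_om.
have homom : bf P om om = invmx P k k by rewrite bf_om.
move: hX; rewrite eX bf_exp // hyom homom => hX hyy.
have : 0 <= t ^+ 2 by apply: sqr_ge0.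
nra.
Qed.
Lemma cone_real (R : realType) (A2 B2 D K : R) :
  0 <= A2 -> 0 <= K -> A2 * B2 <= K ^+ 2 ->
  (forall t, 0 <= B2 + 2 * t * D + t ^+ 2 * A2) -> D <= K.
Proof.
move=> hA hK hAB hq. rewrite leNgt; apply/negP => hD.
have hD0 : 0 < D by lra.
case: (eqVneq A2 0) => hA0.
  have := hq (- (B2 + 1) / (2 * D)). rewrite hA0 mulr0 addr0.
  have -> : 2 * (- (B2 + 1) / (2 * D)) * D = - (B2 + 1) by field; lra.
  lra.
have hAp : 0 < A2 by rewrite lt_def hA0 hA.
have := hq (- D / A2).
have -> : B2 + 2 * (- D / A2) * D + (- D / A2) ^+ 2 * A2 = (A2 * B2 - D ^+ 2) / A2.
  by field; lra.
rewrite pmulr_lge0 ?invr_gt0 // subr_ge0 => h.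
have : K ^+ 2 < D ^+ 2 by rewrite ltr_pXn2r // ?nnegrE; lra.
lra.
Qed.

Lemma uperp (R : realType) m (P : 'M[R]_m) (u w : 'rV[R]_m) :
  P^T = P -> (forall k (y : 'rV_m), y 0 k = 0 -> 0 <= bf P y y) ->
  bf P u u < 0 -> bf P w u = 0 -> 0 <= bf P w w.
Proof.
move=> hP hpsd hu hw.
have [k hk] : exists k, u 0 k != 0.
  apply: contrapT => hall. move: hu. 
  have -> : u = 0.
    apply/rowP => k. rewrite mxE.
    case: (eqVneq (u 0 k) 0) => // hk; exfalso; apply: hall; by exists k.
  by rewrite /bf mul0mx mul0mx mxE ltxx.
set t := w 0 k / u 0 k.
have := hpsd k (w + (- t) *: u).
rewrite bf_exp // hw.
have -> : (w + - t *: u) 0 k = 0.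
  rewrite !mxE /t. by rewrite mulNr divfK // subrr.
move=> /(_ erefl). have : 0 <= t ^+ 2 by apply: sqr_ge0. 
rewrite sqrrN. nra.
Qed.

Lemma same_cone (R : realType) m (P : 'M[R]_m) (u a b : 'rV[R]_m) :
  P^T = P -> (forall k (y : 'rV_m), y 0 k = 0 -> 0 <= bf P y y) ->
  bf P u u < 0 -> bf P a a <= 0 -> bf P b b <= 0 ->
  0 <= bf P a u -> 0 <= bf P b u -> bf P a b <= 0.
Proof.
move=> hP hpsd hu ha hb hal hbe.
set s := bf P u u in hu *. set al := bf P a u in hal *. set be := bf P b u in hbe *.
have hs0 : s != 0 by rewrite lt_eqF.
set a' := a + (- al / s) *: u. set b' := b + (- be / s) *: u.
have ha'u : bf P a' u = 0.
  rewrite /a' bfDl bfZl -/al -/s. field. done.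
have hb'u : bf P b' u = 0.
  rewrite /b' bfDl bfZl -/be -/s. field. done.
have hA2 : bf P a' a' = bf P a a - al ^+ 2 / s.
  rewrite /a' bf_exp // -/al -/s. field. done.
have hB2 : bf P b' b' = bf P b b - be ^+ 2 / s.
  rewrite /b' bf_exp // -/be -/s. field. done.
have hD : bf P b' a' = bf P a b - al * be / s.
  rewrite /a' /b' bf_exp2 -/be -/s (bfC u a hP) -/al (bfC b a hP). field. done.
have hA0 : 0 <= bf P a' a' by apply: uperp hu ha'u.
have hB0 : 0 <= bf P b' b' by apply: uperp hu hb'u.
have hq : forall t, 0 <= bf P b' b' + 2 * t * bf P b' a' + t ^+ 2 * bf P a' a'.
  move=> t. have := uperp (w := b' + t *: a') hP hpsd hu.
  rewrite bf_exp // bfDl bfZl ha'u hb'u mulr0 addr0 => /(_ erefl).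
  done.
have hK : (0 : R) <= al * be / (- s).
  apply: divr_ge0; [exact: mulr_ge0 | lra].
have hAB : bf P a' a' * bf P b' b' <= (al * be / (- s)) ^+ 2.
  have e : (al * be / (- s)) ^+ 2 = (al ^+ 2 / (- s)) * (be ^+ 2 / (- s)).
    by field; rewrite ?oppr_eq0.
  rewrite e. apply: ler_pM => //.
    rewrite hA2 invrN mulrN. lra.
  rewrite hB2 invrN mulrN. lra.
have := cone_real hA0 hK hAB hq. rewrite hD.
have -> : al * be / - s = - (al * be / s) by rewrite invrN mulrN.
lra.
Qed.

Lemma W_nonpos (R : realType) m (P : 'M[R]_m) (X u : 'rV[R]_m) k l :
  P^T = P -> (forall k (y : 'rV_m), y 0 k = 0 -> 0 <= bf P y y) ->
  bf P X X < 0 -> (forall t, 0 <= u 0 t) -> bf P u u < 0 -> invmx P k l <= 0.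
Proof.
move=> hP hpsd hX hu0 hu.
have hun := unitP hP hpsd hX.
have [h1 h2 h3] := Wprops hP hun.
have -> : invmx P k l = bf P (ev R k *m invmx P) (ev R l *m invmx P).
  by rewrite bf_om // ev_row -[in LHS]h3 mxE.
apply: (same_cone hP hpsd hu).
- rewrite bf_om // ev_row. exact: W_diag hP hpsd hX.
- rewrite bf_om // ev_row. exact: W_diag hP hpsd hX.
- by rewrite bf_om.
- by rewrite bf_om.
Qed.

Lemma main_ineq (R : realType) m (P : 'M[R]_m) (X u : 'rV[R]_m) (i j : 'I_m) :
  P^T = P -> (forall k (y : 'rV_m), y 0 k = 0 -> 0 <= bf P y y) ->
  bf P X X < 0 -> (forall t, 0 <= u 0 t) -> bf P u u < 0 ->
  P i i = 2 -> P i j = -1 -> (forall k, k != i -> P i k = 0 \/ P i k = -1) ->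
  (forall k, (X *m P) 0 k <= 0) -> (X *m P) 0 i = 0 ->
  (forall k, P i k = -1 -> - (X *m P) 0 j <= - (X *m P) 0 k) ->
  2 * ((X *m P) 0 j) ^+ 2 <= - bf P X X.
Proof.
move=> hP hpsd hX hu0 hu hii hij hik hC hCi hmin.
have hun := unitP hP hpsd hX.
have [h1 h2 h3] := Wprops hP hun.
set W := invmx P in h1 h2 h3 *.
set C := - (X *m P).
set c := C 0 j.
have hCk : forall k, C 0 k = - (X *m P) 0 k by move=> k; rewrite mxE.
have hc0 : 0 <= c by rewrite /c hCk oppr_ge0.
have eXX : bf P X X = bf W C C.
  have hX' : X = (-1) *: (C *m W).
    by rewrite scaleN1r /C mulNmx opprK -mulmxA h1 mulmx1.
  rewrite hX' bfZl bfZr !mulN1r opprK /bf trmx_mul h3.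
  by rewrite -!mulmxA (mulmxA W P) h2 mul1mx.
set G := (- c) *: (ev R i *m P + (-2) *: ev R i).
have eGG : bf W G G = c ^+ 2 * (4 * W i i - 2).
  rewrite /G bfZl bfZr bf_exp //.
  have e1 : bf W (ev R i *m P) (ev R i *m P) = 2.
    rewrite /bf trmx_mul hP -!mulmxA (mulmxA W P) h2 mul1mx mulmxA.
    by rewrite -/(bf P (ev R i) (ev R i)) bf_er ev_row.
  have e2 : bf W (ev R i *m P) (ev R i) = 1.
    rewrite /bf -(mulmxA (ev R i)) h1 mulmx1 ev_mul /ev mxE !eqxx //.
  have e3 : bf W (ev R i) (ev R i) = W i i by rewrite bf_er ev_row.
  rewrite e1 e2 e3. ring.
have hG : forall k, G 0 k = c * (2 * (k == i)%:R - P i k).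
  move=> k. rewrite /G [LHS]mxE [X in _ * X]mxE ev_row [X in _ + X]mxE /ev mxE eqxx /=.
  ring.
have hGC : forall k, 0 <= G 0 k <= C 0 k.
  move=> k; rewrite hG hCk. case: (eqVneq k i) => [->|hki].
    rewrite hii hCi /=. apply/andP; split; lra.
  rewrite mulr0 sub0r. case: (hik k hki) => hk; rewrite hk.
    rewrite oppr0 mulr0 lexx /= oppr_ge0. exact: hC.
  rewrite opprK mulr1 hc0 /=. have := hmin k hk. by rewrite /c hCk.
have hle : bf W C C <= bf W G G.
  rewrite !bf_sum. apply: ler_sum => k _; apply: ler_sum => l _.
  have hW : W k l <= 0 by apply: (W_nonpos k l hP hpsd hX hu0 hu).
  have /andP [g1 g2] := hGC k. have /andP [g3 g4] := hGC l.
  have hprod : G 0 k * G 0 l <= C 0 k * C 0 l by apply: ler_pM.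
  nra.
have hWii : W i i <= 0 by apply: (W_diag i hP hpsd hX).
rewrite eXX. have : 0 <= c ^+ 2 by apply: sqr_ge0.
have -> : (X *m P) 0 j ^+ 2 = c ^+ 2 by rewrite /c hCk sqrrN.
nra.
Qed.
Lemma cos_pi3 (R : realType) : cos (pi / 3 : R) = 1 / 2.
Proof.
set t := pi / 3 : R.
have hp : pi = t + t + t by rewrite /t; field.
have h3 : cos (pi : R) = 4 * cos t ^+ 3 - 3 * cos t.
  rewrite hp !cosD sinD.
  have := sin2cos2 t. move=> e.
  have : sin t * sin t = 1 - cos t ^+ 2 by rewrite -e expr2.
  move=> e2. set c := cos t in e2 *; set s := sin t in e2 *.
  have -> : c * c - s * s = c^+2 - s * s by rewrite expr2.
  rewrite e2. 
  have -> : (c ^+ 2 - (1 - c ^+ 2)) * c - (s * c + c * s) * s = (c ^+ 2 - (1 - c ^+ 2)) * c - 2 * c * (s * s) by ring.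
  rewrite e2; ring.
have hc : 0 < cos t.
  apply: cos_gt0_pihalf. have := pi_gt0 R. rewrite /t. move=> h. apply/andP; split; lra.
rewrite cospi in h3.
have : (cos t + 1) * (2 * cos t - 1) ^+ 2 = 0 by nra.
move/eqP; rewrite mulf_eq0 => /orP [/eqP|]; first by lra.
rewrite expf_eq0 /= => /eqP; lra.
Qed.

Lemma acos_half (R : realType) : acos (1 / 2 : R) = pi / 3.
Proof.
rewrite -cos_pi3 cosK //. rewrite in_itv /=. have := pi_gt0 R => h. apply/andP; split; lra.
Qed.


Definition Mr (R : realType) m (A : 'M[int]_m) : 'M[R]_m := \matrix_(i, j) ((A i j)%:~R : R).
Definition rv (R : realType) m (x : 'I_m -> R) : 'rV[R]_m := \row_j x j.
Definition restr (R : realType) m (S : {set 'I_m}) (v : 'I_m -> R) : 'I_m -> R :=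
  fun t => if t \in S then v t else 0.

Lemma gramE (R : realType) m (A : 'M[int]_m) (x y : 'I_m -> R) :
  gram_form A x y = bf (Mr R A) (rv x) (rv y).
Proof.
rewrite bf_sum /gram_form. apply: eq_bigr => k _; apply: eq_bigr => l _.
by rewrite !mxE.
Qed.

Lemma rv_sroot (R : realType) m (k : 'I_m) : rv (sroot R k) = ev R k.
Proof. by apply/rowP => t; rewrite /rv /ev /sroot !mxE. Qed.

Lemma symA m (A : 'M[int]_m) i j : simply_laced A -> A i j = A j i.
Proof.
move=> [h1 [h2 h3]]. case: (eqVneq i j) => [->//|hij].
have hji : j != i by rewrite eq_sym.
case: (h2 i j hij) => e1; case: (h2 j i hji) => e2; rewrite e1 e2 //.
- by move/(h3 i j): e1; rewrite e2.
- by move/(h3 j i): e2; rewrite e1.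
Qed.

Lemma Mr_sym (R : realType) m (A : 'M[int]_m) : simply_laced A -> (Mr R A)^T = Mr R A.
Proof. move=> h; apply/matrixP => k l; by rewrite !mxE (symA k l h). Qed.

Lemma subformE (R : realType) m (A : 'M[int]_m) S (v : 'I_m -> R) :
  subform A S v = gram_form A (restr S v) (restr S v).
Proof.
rewrite /subform /gram_form big_mkcond /=. apply: eq_bigr => k _.
rewrite /restr. case: (k \in S).
  rewrite big_mkcond /=. apply: eq_bigr => l _. by case: (l \in S); rewrite ?mulr0.
by rewrite big1 // => l _; rewrite !mul0r.
Qed.

Lemma cross0 (R : realType) m (A : 'M[int]_m) (S1 S2 : {set 'I_m}) (v : 'I_m -> R) :
  (forall k l, k \in S1 -> l \in S2 -> A k l = 0) ->
  bf (Mr R A) (rv (restr S1 v)) (rv (restr S2 v)) = 0.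
Proof.
move=> h. rewrite bf_sum big1 // => k _. rewrite big1 // => l _.
rewrite !mxE /restr. case: (boolP (k \in S1)) => hk; last by rewrite !mul0r.
case: (boolP (l \in S2)) => hl; last by rewrite mulr0.
by rewrite h // mulr0 mul0r.
Qed.

Lemma psd_proper (R : realType) m (A : 'M[int]_m) :
  simply_laced A -> hyperbolic R A ->
  forall S : {set 'I_m}, S \proper [set: 'I_m] -> forall v : 'I_m -> R, 0 <= subform A S v.
Proof.
move=> hSL hH.
suff H : forall n (S : {set 'I_m}), (#|S| <= n)%N -> S \proper [set: 'I_m] ->
    forall v : 'I_m -> R, 0 <= subform A S v by move=> S; apply: H (leqnn _).
elim=> [|n IH] S.
  rewrite leqn0 cards_eq0 => /eqP -> _ v. by rewrite /subform big_set0.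
move=> hcard hprop v.
case: (pselect (connected_sub A S)) => hconn.
  case: (hH.2.2.2 S hprop hconn) => [hfin|[haff _]]; last exact: haff v.
  case: (pselect (exists2 i, i \in S & v i != 0)) => hex; first by apply/ltW/hfin.
  rewrite /subform big1 // => k hk.
  have -> : v k = 0 by case: (eqVneq (v k) 0) => // hk'; exfalso; apply: hex; exists k.
  by rewrite big1 // => l _; rewrite !mul0r.
case: (eqVneq S finset.set0) => [->|hS0]; first by rewrite /subform big_set0.
have [a [b [ha hb hab]]] : exists a b, [/\ a \in S, b \in S &
    ~~ connect (dynkin_rel A S) a b].
  apply: contrapT => hno; apply: hconn; split => // a b ha hb.
  apply: contrapT => hc. apply: hno. exists a, b. split => //. by apply/negP.
set S1 := [set t in S | connect (dynkin_rel A S) a t].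
set S2 := S :\: S1.
have hS1S : S1 \proper S.
  apply/properP; split.
    by apply/fintype.subsetP => t; rewrite inE => /andP[].
  exists b => //; by rewrite inE hb /=.
have haS1 : a \in S1 by rewrite inE ha connect0.
have hS2S : S2 \proper S.
  apply/properP; split; first exact: finset.subsetDl.
  exists a => //; by rewrite finset.in_setD haS1.
have c1 : (#|S1| <= n)%N.
  have := proper_card hS1S. move: hcard. lia.
have c2 : (#|S2| <= n)%N.
  have := proper_card hS2S. move: hcard. lia.
have p1 := IH S1 c1 (sub_proper_trans (proper_sub hS1S) hprop) v.
have p2 := IH S2 c2 (sub_proper_trans (proper_sub hS2S) hprop) v.
have hz : forall k l, k \in S1 -> l \in S2 -> A k l = 0.
  move=> k l hk hl. have := hl; rewrite finset.in_setD => /andP [_ hlS].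
  apply/eqP; apply: contraTT hl => hkl.
  rewrite finset.in_setD negb_and negbK. apply/orP; left.
  move: hk; rewrite inE => /andP [hkS hak].
  case: (eqVneq k l) => [<-|hkl']; first by rewrite inE hkS hak.
  rewrite inE hlS /=. apply: (connect_trans hak). apply: connect1.
  by rewrite /dynkin_rel hkS hlS hkl' hkl.
have hz' : forall k l, k \in S2 -> l \in S1 -> A k l = 0.
  move=> k l hk hl. rewrite (symA k l hSL). exact: hz.
have hsplit : rv (restr S v) = rv (restr S1 v) + rv (restr S2 v).
  apply/rowP => t. rewrite !mxE /restr /S2 finset.in_setD.
  case: (boolP (t \in S1)) => h1 /=.
    have -> : t \in S by move: h1; rewrite inE => /andP[].
    by rewrite addr0.
  by rewrite add0r.
move: p1 p2. rewrite !subformE !gramE hsplit !bfDl !bfDr.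
rewrite (cross0 v hz) (cross0 v hz'). lra.
Qed.

Lemma psd_k (R : realType) m (A : 'M[int]_m) :
  simply_laced A -> hyperbolic R A ->
  forall k (y : 'rV[R]_m), y 0 k = 0 -> 0 <= bf (Mr R A) y y.
Proof.
move=> hSL hH k y hy.
have hp : [set~ k] \proper [set: 'I_m].
  rewrite properT. apply/eqP => e. have : k \in [set~ k] by rewrite e inE.
  by rewrite !inE eqxx.
have := psd_proper hSL hH hp (fun t => y 0 t).
rewrite subformE gramE.
have -> : rv (restr [set~ k] (fun t => y 0 t)) = y.
  apply/rowP => t; rewrite !mxE /restr !inE.
  by case: (eqVneq t k) => [->|].
done.
Qed.

Lemma gram_abs (R : realType) m (A : 'M[int]_m) (x : 'I_m -> R) :
  simply_laced A ->
  gram_form A (fun t => `|x t|) (fun t => `|x t|) <= gram_form A x x.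
Proof.
move=> [h1 [h2 h3]]. apply: ler_sum => k _; apply: ler_sum => l _.
case: (eqVneq k l) => [<-|hkl].
  rewrite h1. have e : `|x k| * `|x k| = x k * x k.
    by rewrite -normrM ger0_norm // -expr2 sqr_ge0.
  have -> : `|x k| * 2%:~R * `|x k| = 2%:~R * (`|x k| * `|x k|) by ring.
  rewrite e. have -> : x k * 2%:~R * x k = 2%:~R * (x k * x k) by ring. done.
case: (h2 k l hkl) => ->; first by rewrite !mulr0 !mul0r.
have := ler_norm (x k * x l). rewrite normrM.
have -> : (-1)%:~R = -1 :> R by [].
lra.
Qed.

Lemma acosh_mono (R : realType) (a b : R) : 1 <= a -> a <= b -> acosh a <= acosh b.
Proof.
move=> ha hab. have hb : 1 <= b by lra.
have sa := sqrtr_ge0 (a ^+ 2 - 1). have sb := sqrtr_ge0 (b ^+ 2 - 1).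
rewrite /acosh ler_ln ?posrE; [| lra | lra].
apply: lerD => //. apply: ler_wsqrtr. apply: lerB => //. nra.
Qed.

Lemma offdiag (R : realType) m (A : 'M[int]_m) k l : simply_laced A -> k != l ->
  Mr R A k l <= 0.
Proof.
move=> [_ [h2 _]] hkl. rewrite mxE. case: (h2 k l hkl) => -> //.

Qed.

Unset Implicit Arguments.

Theorem lemma2p2 (R : realType) (m : nat) (A : 'M[int]_m)
  (hSL : simply_laced A) (hH : hyperbolic R A)
  (i : 'I_m) (x : 'I_m -> R)
  (hxC : in_chamber A x) (hxH : gram_form A x x < 0)
  (hxi : gram_form A x (sroot R i) = 0) :
  exists j : 'I_m, j != i /\ dihedral_angle R A i j = pi / 3 /\
    exists y : 'I_m -> R,
      [/\ in_chamber A y, gram_form A y y < 0,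
          gram_form A y (sroot R i) = 0, gram_form A y (sroot R j) = 0 &
          hdist A x y <= acosh (Num.sqrt (4 / 3 : R))].
Proof.
have hP : (Mr R A)^T = Mr R A := Mr_sym R hSL.
set P := Mr R A in hP *.
have hpsd : forall k (y : 'rV[R]_m), y 0 k = 0 -> 0 <= bf P y y := psd_k hSL hH.
set X := rv x.
have hX : bf P X X < 0 by rewrite /P /X -gramE.
set u := rv (fun t => `|x t|).
have hu0 : forall t, 0 <= u 0 t by move=> t; rewrite mxE.
have hu : bf P u u < 0.
  by rewrite /u /P -gramE; apply: le_lt_trans (gram_abs x hSL) hxH.
have hg : forall (z : 'I_m -> R) k, gram_form A z (sroot R k) = (rv z *m P) 0 k.
  by move=> z k; rewrite gramE rv_sroot bf_er.
have hC : forall k, (X *m P) 0 k <= 0 by move=> k; rewrite -hg; exact: hxC k.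
have hCi : (X *m P) 0 i = 0 by rewrite -hg.
have hPe : forall k l, P k l = (A k l)%:~R by move=> k l; rewrite mxE.
have [h1 [h2 h3]] := hSL.
have [j0 hj0i hj0] : exists2 j0, j0 != i & A i j0 = -1.
  have [k hki] : exists k, k != i.
    apply: contrapT => hall.
    have hall' : forall k, k = i.
      move=> k; apply/eqP; case: (eqVneq k i) => // h; exfalso; apply: hall; by exists k.
    apply: hH.2.1 => v [k _ hk]. rewrite (hall' k) in hk.
    rewrite /subform (big_pred1 i) => [|t]; last by rewrite (hall' t) !inE /= eqxx.
    rewrite (big_pred1 i) => [|t]; last by rewrite (hall' t) !inE /= eqxx.
    rewrite h1. have : 0 < v i ^+ 2 by rewrite lt_def sqrf_eq0 hk sqr_ge0.
    have -> : (2%:~R : R) = 2 by []. rewrite expr2. nra.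
  have := hH.1.2 i k (finset.in_setT i) (finset.in_setT k).
  case/connectP => p. case: p => [|j0 p] /=.
    by move=> _ e; move: hki; rewrite e eqxx.
  move=> /andP [hr _] _. move: hr; rewrite /dynkin_rel => /and4P [_ _ hij hA].
  exists j0; first by rewrite eq_sym.
  by case: (h2 i j0 hij) => e; [move: hA; rewrite e eqxx | ].
set F := fun k => - (X *m P) 0 k.
case: (@arg_minP _ _ _ j0 (fun k => A i k == -1) F (introT eqP hj0)) => j hj hmin.
move/eqP: hj => hj.
have hji : j != i by apply/eqP => e; move: hj; rewrite e h1.
have hPji : P j i = -1 by rewrite hPe (symA j i hSL) hj.
have hPij : P i j = -1 by rewrite hPe hj.
have hPii : P i i = 2 by rewrite hPe h1.
have hPjj : P j j = 2 by rewrite hPe h1.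
have hmain : 2 * ((X *m P) 0 j) ^+ 2 <= - bf P X X.
  apply: (@main_ineq R m P X u i j hP hpsd hX hu0 hu hPii hPij _ hC hCi).
  - move=> k hk; rewrite hPe. have hik : i != k by rewrite eq_sym.
    by case: (h2 i k hik) => ->; [left | right].
  - move=> k hk. apply: hmin. rewrite hPe in hk. apply/eqP. apply: (@intr_inj R).
    by rewrite hk.
set c := - (X *m P) 0 j.
have hc0 : 0 <= c by rewrite /c oppr_ge0.
have hc2 : ((X *m P) 0 j) ^+ 2 = c ^+ 2 by rewrite /c sqrrN.
rewrite hc2 in hmain.
set s := 2 * c / 3.
set Z := ev R j + (1/2) *: ev R i.
set Y := X + s *: Z.
exists j. split; first exact hji. split.
  rewrite /dihedral_angle !hg !rv_sroot !ev_row hPij hPii hPjj.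
  have -> : (2 * 2 : R) = 2 ^+ 2 by rewrite expr2.
  rewrite sqrtr_sqr ger0_norm // opprK. exact: acos_half.
exists (fun k => Y 0 k).
have hy : rv (fun k => Y 0 k) = Y by apply/rowP => k; rewrite mxE.
have hXZ : bf P X Z = - c by rewrite /Z bfDr bfZr !bf_er hCi /c; ring.
have hZk : forall k, bf P Z (ev R k) = P j k + 1/2 * P i k.
  by move=> k; rewrite /Z bfDl bfZl !bf_er !ev_row.
have hZZ : bf P Z Z = 3/2.
  rewrite {1 2}/Z bf_exp // !bf_er !ev_row hPjj hPji hPii. by field.
have hYk : forall k, gram_form A (fun k => Y 0 k) (sroot R k) =
    (X *m P) 0 k + s * (P j k + 1/2 * P i k).
  by move=> k; rewrite hg hy -bf_er /Y bfDl bfZl hZk bf_er.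
have hYY : gram_form A (fun k => Y 0 k) (fun k => Y 0 k) = bf P X X - 2 * c ^+ 2 / 3.
  rewrite gramE hy /Y bf_exp // hXZ hZZ /s. by field.
have hXY : gram_form A x (fun k => Y 0 k) = bf P X X - 2 * c ^+ 2 / 3.
  rewrite gramE hy -/X /Y bfDr bfZr hXZ /s. by field.
have hs0 : 0 <= s by rewrite /s; lra.
split.
- move=> k; rewrite hYk.
  case: (eqVneq k i) => [->|hki].
    rewrite hCi hPji hPii. lra.
  case: (eqVneq k j) => [->|hkj].
    rewrite hPjj hPij /s -/c. have -> : (X *m P) 0 j = - c by rewrite /c opprK.
    lra.
  have hjk : j != k by rewrite eq_sym.
  have hik : i != k by rewrite eq_sym.
  have o1 := offdiag R hSL hjk. have o2 := offdiag R hSL hik. have := hC k.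
  nra.
- rewrite hYY. have := sqr_ge0 c. lra.
- rewrite hYk hCi hPji hPii. lra.
- rewrite hYk hPjj hPij. have -> : (X *m P) 0 j = - c by rewrite /c opprK.
  rewrite /s. lra.
rewrite /hdist hXY hYY gramE -/P -/X.
set p := bf P X X in hX hmain *.
set q := p - 2 * c ^+ 2 / 3.
have hq : q < 0 by rewrite /q; have := sqr_ge0 c; lra.
have er : q ^+ 2 / (p * q) = q / p.
  by field; apply/andP; split; rewrite lt_eqF.
rewrite er. set r := q / p.
have hr : r * p = q by rewrite /r divfK // lt_eqF.
have hr1 : 1 <= r by rewrite /q in hr; nra.
have hr2 : r <= 4 / 3 by rewrite /q in hr; nra.
apply: acosh_mono.
  rewrite -sqrtr1. exact: ler_wsqrtr.
exact: ler_wsqrtr.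
Qed.
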